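(* Let $G=(V,E)$ be a graph and $g:V\to[0,r]$ a function such that $VS_g(x,y)\le v$ for all $x,y\in V$. Let $M$ be a maximal matching in the violation graph $B_{2v/3,g}$ (each edge $(x,y)\in M$ oriented so that $g(x)<g(y)$). Obtain $h$ from $g$ by setting, for every $(x,y)\in M$, $h(x)=g(x)+v/3$ and $h(y)=g(y)-v/3$, and $h(z)=g(z)$ for unmatched $z$. Then $VS_h(x,y)\le 2v/3$ for all $x,y\in V$.
   Context: $\mathrm{dist}_G$ is the shortest-path distance. For $f:V\to\mathbb{R}$, the violation score is $VS_f(x,y)=|f(x)-f(y)|-\mathrm{dist}_G(x,y)$ if this quantity is positive and $0$ otherwise. For $\tau\ge0$, the violation graph $B_{\tau,f}$ is the directed graph on $V$ with edge set $\{(x,y): VS_f(x,y)>\tau \text{ and } f(x)<f(y)\}$; a matching in it means a matching in its underlying undirected graph. *)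

(* Defs.v *)
From HB Require Import structures.
From mathcomp Require Import all_boot all_order all_algebra.
Set Implicit Arguments. Unset Strict Implicit. Unset Printing Implicit Defensive.
Import Order.TTheory GRing.Theory Num.Theory.
Local Open Scope ring_scope.

Section Defs.
Variables (V : finType) (e : rel V).

Fixpoint reachn (x : V) (n : nat) : {set V} :=
  match n with
  | 0 => [set x]
  | n'.+1 => [set z | [exists y in reachn x n', e y z]]
  end.

(* shortest-path distance: Some d, or None (= +infinity) if y is not
   reachable from x.  A shortest walk is a simple path, so it has
   fewer than #|V| edges; searching n in [0, #|V|) is exhaustive. *)
Definition dist (x y : V) : option nat :=
  let i := find (fun n => y \in reachn x n) (iota 0 #|V|) in
  if (i < #|V|)%N then Some i else None.

Variable R : realFieldType.

(* violation score; with infinite distance the quantity is negative, hence 0 *)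
Definition VS (f : V -> R) (x y : V) : R :=
  match dist x y with
  | Some d => Num.max 0 (`|f x - f y| - d%:R)
  | None => 0
  end.

Definition viol_edge (tau : R) (f : V -> R) (x y : V) : bool :=
  (tau < VS f x y) && (f x < f y).

Definition is_matching (tau : R) (f : V -> R) (M : {set V * V}) : Prop :=
  (forall p, p \in M -> viol_edge tau f p.1 p.2) /\
  (forall p q, p \in M -> q \in M -> p != q ->
     [disjoint [set p.1; p.2] & [set q.1; q.2]]).

Definition is_maximal_matching (tau : R) (f : V -> R) (M : {set V * V}) : Prop :=
  is_matching tau f M /\
  (forall x y, viol_edge tau f x y -> (x, y) \notin M ->
     ~ is_matching tau f ((x, y) |: M)).

Definition shift_along (g : V -> R) (v : R) (M : {set V * V}) (z : V) : R :=
  if [exists y, (z, y) \in M] then g z + v / 3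
  else if [exists x, (x, z) \in M] then g z - v / 3
  else g z.

End Defs.

(* Main.v *)
Require Import Defs.
From HB Require Import structures.
From mathcomp Require Import all_boot all_order all_algebra.
Import Order.TTheory GRing.Theory Num.Theory.
Set Implicit Arguments. Unset Strict Implicit. Unset Printing Implicit Defensive.

Section Dist.
Variables (V : finType) (e : rel V) (e_sym : symmetric e).

Lemma reachnP x y n : y \in reachn e x n <-> exists p, [/\ size p = n, path e x p & last x p = y].
Proof.
elim: n y => [|n IH] y /=.
  rewrite inE; split; first by move/eqP->; exists [::].
  by case=> -[|a p] [] // _ _ /= ->.
rewrite inE; split.
  case/existsP=> y' /andP[/IH[p [Hs Hp Hl]] He].
  exists (rcons p y); rewrite size_rcons rcons_path last_rcons Hs Hp Hl He; split=> //.
case=> p []; case/lastP: p => [//|p z]; rewrite size_rcons rcons_path last_rcons.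
move=> [Hs] /andP[Hp He] Hz; apply/existsP; exists (last x p).
rewrite -Hz He andbT; apply/IH; by exists p.
Qed.

Lemma reach_short x y n : y \in reachn e x n -> exists2 m, (m < #|V|)%N & y \in reachn e x m.
Proof.
case/reachnP=> p [_ Hp <-]; case: (shortenP Hp) => p' Hp' Hu _.
exists (size p'); last by apply/reachnP; exists p'.
have := max_card (mem (x :: p')); move/card_uniqP: Hu => -> /=; by [].
Qed.

Lemma last_rev_belast (x : V) p : last (last x p) (rev (belast x p)) = x.
Proof. by case: p => //= y p; rewrite rev_cons last_rcons. Qed.

Lemma reach_sym x y n : y \in reachn e x n -> x \in reachn e y n.
Proof.
case/reachnP=> p [Hs Hp Hl]; apply/reachnP; exists (rev (belast x p)).
rewrite size_rev size_belast -Hl last_rev_belast rev_path; split=> //.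
by rewrite (@eq_path _ _ e) // => a b; rewrite /= e_sym.
Qed.

Lemma reach_trans x y z a b : y \in reachn e x a -> z \in reachn e y b ->
  z \in reachn e x (a + b).
Proof.
case/reachnP=> p [Hs Hp Hl]; case/reachnP=> q [Hs' Hq Hl'].
apply/reachnP; exists (p ++ q); rewrite size_cat cat_path last_cat Hl Hp Hq Hs Hs'.
by split.
Qed.

Lemma dist_some x y d : dist e x y = Some d ->
  y \in reachn e x d /\ forall m, y \in reachn e x m -> (d <= m)%N.
Proof.
rewrite /dist; set P := (fun n => _); set i := find _ _.
case: ifP => // Hi [<-].
have Hh : has P (iota 0 #|V|) by rewrite has_find size_iota.
have := nth_find 0 Hh; rewrite -/i nth_iota // add0n => Hy; split=> // m Hm.
case: (ltnP m #|V|) => Hm'; last by apply: ltnW; exact: leq_trans Hi Hm'.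
rewrite leqNgt; apply/negP => Hlt; have := before_find 0 Hlt.
by rewrite nth_iota // add0n /P Hm.
Qed.

Lemma dist_ex x y n : y \in reachn e x n -> exists d, dist e x y = Some d.
Proof.
case/reach_short=> m Hm Hy; rewrite /dist; set P := (fun n : nat => y \in reachn e x n).
have Hh : has P (iota 0 #|V|) by apply/hasP; exists m => //; rewrite mem_iota.
by move: Hh; rewrite has_find size_iota => ->; eexists.
Qed.

Lemma dist_sym x y d : dist e x y = Some d -> dist e y x = Some d.
Proof.
move=> /dist_some [Hy Hm]; have [d' Hd'] := dist_ex (reach_sym Hy).
case/dist_some: (Hd') => Hx Hm'; rewrite Hd'; congr Some.
by apply/eqP; rewrite eqn_leq (Hm' _ (reach_sym Hy)) (Hm _ (reach_sym Hx)).
Qed.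

Lemma dist_tri x y z a b : dist e x y = Some a -> dist e y z = Some b ->
  exists2 c, dist e x z = Some c & (c <= a + b)%N.
Proof.
move=> /dist_some [Hy _] /dist_some [Hz _]; have H := reach_trans Hy Hz.
have [c Hc] := dist_ex H; exists c => //; by case/dist_some: Hc => _ ->.
Qed.
End Dist.

From mathcomp Require Import lra.
Local Open Scope ring_scope.

Section Main.
Variables (R : realFieldType) (V : finType) (e : rel V) (e_sym : symmetric e)
  (g : V -> R) (v : R) (M : {set V * V}).
Hypothesis hVS : forall x y, VS e g x y <= v.
Hypothesis hM : is_maximal_matching e (2 * v / 3) g M.

Lemma v_ge0 (x : V) : 0 <= v.
Proof.
apply: le_trans (hVS x x); rewrite /VS; case: dist => // k; by rewrite le_max lexx.
Qed.

Lemma bound p q k : dist e p q = Some k -> g p - g q <= k%:R + v.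
Proof.
move=> Hk; have := hVS p q; rewrite /VS Hk ge_max => /andP[_ H].
have := ler_norm (g p - g q); lra.
Qed.

Lemma edge p q : (p, q) \in M -> exists k, dist e p q = Some k /\ k%:R + 2 * v / 3 < g q - g p.
Proof.
move=> /hM.1.1 /andP[]; rewrite /VS /=; have := v_ge0 p.
case: dist => [k|] Hv; last lra.
rewrite lt_max => /orP[H|H] Hlt; first lra.
exists k; split=> //; move: H; rewrite distrC gtr0_norm ?subr_gt0 //; lra.
Qed.

Lemma tri p q s a b : dist e p q = Some a -> dist e q s = Some b ->
  exists c, dist e p s = Some c /\ c%:R <= a%:R + b%:R :> R.
Proof.
move=> H1 H2; have [c Hc Hle] := dist_tri H1 H2; exists c; split=> //.
by rewrite -natrD ler_nat.
Qed.

Let h := shift_along g v M.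

Lemma classify z :
  (exists z', (z, z') \in M /\ h z = g z + v / 3) \/
  (exists z', (z', z) \in M /\ h z = g z - v / 3) \/
  (h z = g z /\ forall q, q \in M -> q.1 != z /\ q.2 != z).
Proof.
rewrite /h /shift_along; case: existsP => [[z' H]|Hn1]; first by left; exists z'.
case: existsP => [[z' H]|Hn2]; first by right; left; exists z'.
right; right; split=> // -[a b] Hq /=; split; apply/eqP => Ha; subst.
  by apply: Hn1; exists b.
by apply: Hn2; exists a.
Qed.

Lemma half x y k : dist e x y = Some k -> h x - h y <= k%:R + 2 * v / 3.
Proof.
move=> Hk; rewrite leNgt; apply/negP => Hlt; have v0 := v_ge0 x.
have Hb := bound Hk.
have k0 : 0 <= k%:R :> R by rewrite ler0n.
case: (classify x) => [[x' [Hx hx]]|[[x' [Hx hx]]|[hx ux]]];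
case: (classify y) => [[y' [Hy hy]]|[[y' [Hy hy]]|[hy uy]]];
rewrite ?hx ?hy in Hlt.
- have [k1 [Hk1 E1]] := edge Hx.
  have [c [Hc Hcle]] := tri (dist_sym e_sym Hk1) Hk.
  have := bound Hc; lra.
- have [k1 [Hk1 E1]] := edge Hx; have [k2 [Hk2 E2]] := edge Hy.
  have [c1 [Hc1 Hcle1]] := tri (dist_sym e_sym Hk1) Hk.
  have [c [Hc Hcle]] := tri Hc1 (dist_sym e_sym Hk2).
  have := bound Hc; lra.
- have [k1 [Hk1 E1]] := edge Hx.
  have [c [Hc Hcle]] := tri (dist_sym e_sym Hk1) Hk.
  have := bound Hc; lra.
- clear Hk; lra.
- have [k2 [Hk2 E2]] := edge Hy.
  have [c [Hc Hcle]] := tri Hk (dist_sym e_sym Hk2).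
  have := bound Hc; lra.
- clear Hk; lra.
- clear Hk; lra.
- have [k2 [Hk2 E2]] := edge Hy.
  have [c [Hc Hcle]] := tri Hk (dist_sym e_sym Hk2).
  have := bound Hc; lra.
- have Hv : viol_edge e (2 * v / 3) g y x.
    rewrite /viol_edge /VS (dist_sym e_sym Hk) lt_max; apply/andP; split; last lra.
    apply/orP; right; rewrite distrC gtr0_norm; lra.
  have Hn : (y, x) \notin M by apply/negP => /uy [/= /eqP].
  have Hd : forall q, q \in M -> [disjoint [set y; x] & [set q.1; q.2]].
    move=> q /[dup] /ux [a1 a2] /uy [b1 b2].
    rewrite disjoint_subset; apply/subsetP => z; rewrite !inE.
    by case/orP => /eqP ->; rewrite negb_or ?(eq_sym y) ?(eq_sym x) ?b1 ?b2 ?a1 ?a2.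
  apply: (hM.2 y x Hv Hn); split.
    by move=> p; rewrite in_setU1 => /orP[/eqP->|/hM.1.1].
  move=> p q; rewrite !in_setU1 => /orP[/eqP->|Hp] /orP[/eqP->|Hq] Hpq.
  + by rewrite eqxx in Hpq.
  + exact: Hd.
  + by rewrite disjoint_sym; exact: Hd.
  + exact: hM.1.2.
Qed.

End Main.

Theorem claim2p3 (R : realFieldType) (V : finType) (e : rel V)
  (e_sym : symmetric e) (e_irr : irreflexive e)
  (g : V -> R) (r v : R)
  (g_range : forall x, 0 <= g x <= r)
  (hVS : forall x y, VS e g x y <= v)
  (M : {set V * V})
  (hM : is_maximal_matching e (2 * v / 3) g M) :
  forall x y, VS e (shift_along g v M) x y <= 2 * v / 3.
Proof.
move=> x y; have v0 := v_ge0 hVS x.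
rewrite /VS; case Hk: dist => [k|]; last lra.
rewrite ge_max; apply/andP; split; first lra.
have H1 := half e_sym hVS hM Hk.
have H2 := half e_sym hVS hM (dist_sym e_sym Hk).
suff: `|shift_along g v M x - shift_along g v M y| <= k%:R + 2 * v / 3 by lra.
apply/ler_normlP; split; lra.
Qed.
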